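(* Assume that the covector $p_a$ satisfies $p_ap^a+\sigma u_au^a=0$ where $\sigma=\sigma_+$ or $\sigma=\sigma_-$. Let $\tilde g^{ab}=g^{ab}+\sigma F^{ac}F^{b}{}_{c}$ and $K^a=\tilde g^{ab}p_b$. Then $$\tilde g^{cd}p_cu_d=\tilde g^{cd}p_cv_d=0,\qquad \tilde g^{cd}u_cv_d=0,\qquad \tilde g^{cd}u_cu_d=\tilde g^{cd}v_cv_d=u^cu_c\,(1+\sigma F-\sigma^2G^2).$$ Consequently $K^ap_a=K^au_a=K^av_a=0$.
   Context: Let $F_{ab}$ be an antisymmetric tensor on an oriented 4-dimensional Lorentzian manifold with metric $g_{ab}$ (signature $(-,+,+,+)$; indices moved with $g$), $\varepsilon_{abcd}$ the volume form, ${}^{*}F_{ab}=\frac12\varepsilon_{abcd}F^{cd}$, $F=\frac12F_{ab}F^{ab}$, $G=-\frac14F_{ab}{}^{*}F^{ab}$. Let $\mathcal{L}(F,G)$ be smooth with partial derivatives $\mathcal{L}_F,\mathcal{L}_{FF},\mathcal{L}_{FG},\mathcal{L}_{GG}$ evaluated at the background invariants. $P=\mathcal{L}_{FF}\mathcal{L}_{GG}-\mathcal{L}_{FG}^2$, $M=\mathcal{L}_F^2+2\mathcal{L}_F\mathcal{L}_{FG}G-\frac12\mathcal{L}_F\mathcal{L}_{GG}F-PG^2$, $N=2\mathcal{L}_F\mathcal{L}_{FF}+\frac12\mathcal{L}_F\mathcal{L}_{GG}-PF$, $\sigma_\pm=\frac{N}{2M}\pm\sqrt{\frac{N^2}{4M^2}-\frac{P}{M}}$.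 Standing assumptions: $\mathcal{L}_F\neq0$, $M\neq0$, $1+\sigma_\pm F-\sigma_\pm^2G^2\neq0$. For a nonzero covector $p_a$ put $u_a=F_{ab}p^b$, $v_a={}^{*}F_{ab}p^b$. *)

(* Defs.v *)
(* pointwise (tensor-algebraic) formalization over a real
   closed field R, in a coordinate basis at a point of the manifold. *)
From HB Require Import structures.
From mathcomp Require Import all_boot all_order all_algebra.
Set Implicit Arguments. Unset Strict Implicit. Unset Printing Implicit Defensive.
Import Order.TTheory GRing.Theory Num.Theory.
Local Open Scope ring_scope.

Section Defs.
Variable R : rcfType.
Implicit Types (g F : 'M[R]_4) (p u : 'I_4 -> R).

(* Lorentzian metric of signature (-,+,+,+) (Sylvester normal form). *)
Definition minkowski : 'M[R]_4 :=
  diag_mx (\row_(i < 4) (if i == ord0 then -1 else 1)).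
Definition lorentzian g : Prop :=
  g^T = g /\ exists P : 'M[R]_4, P \in unitmx /\ P^T *m g *m P = minkowski.

Definition antisym F : Prop := forall a b, F a b = - F b a.

Definition ginv g : 'M[R]_4 := invmx g.

Definition levi (a b c d : 'I_4) : R :=
  \det (\matrix_(i < 4, j < 4) ((j == nth ord0 [:: a; b; c; d] i)%:R : R)).

(* volume form eps_{abcd} in a coordinate basis; [o] = true iff the basis is
   positively oriented (eps = sqrt|det g| [abcd]), otherwise the sign flips. *)
Definition eps (o : bool) g (a b c d : 'I_4) : R :=
  (if o then 1 else -1) * Num.sqrt `|\det g| * levi a b c d.

Definition up2 g F : 'M[R]_4 := ginv g *m F *m (ginv g)^T.
Definition up1 g F : 'M[R]_4 := ginv g *m F.
Definition upv g p : 'I_4 -> R := fun a => \sum_(b < 4) ginv g a b * p b.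

Definition dual o g F : 'M[R]_4 :=
  \matrix_(a < 4, b < 4)
     (2^-1 * \sum_(c < 4) \sum_(d < 4) eps o g a b c d * up2 g F c d).

Definition Finvar g F : R := 2^-1 * \sum_(a < 4) \sum_(b < 4) F a b * up2 g F a b.
Definition Ginvar o g F : R :=
  - 4^-1 * \sum_(a < 4) \sum_(b < 4) F a b * up2 g (dual o g F) a b.

Definition contr g (T : 'M[R]_4) p : 'I_4 -> R :=
  fun a => \sum_(b < 4) T a b * upv g p b.

Definition bil (h : 'M[R]_4) (x y : 'I_4 -> R) : R :=
  \sum_(a < 4) \sum_(b < 4) h a b * x a * y b.

Definition cP (LFF LFG LGG : R) : R := LFF * LGG - LFG ^+ 2.
Definition cM (LF LFF LFG LGG Fi Gi : R) : R :=
  LF ^+ 2 + 2 * LF * LFG * Gi - 2^-1 * LF * LGG * Fi - cP LFF LFG LGG * Gi ^+ 2.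
Definition cN (LF LFF LFG LGG Fi : R) : R :=
  2 * LF * LFF + 2^-1 * LF * LGG - cP LFF LFG LGG * Fi.
Definition discr (LF LFF LFG LGG Fi Gi : R) : R :=
  let M := cM LF LFF LFG LGG Fi Gi in let N := cN LF LFF LFG LGG Fi in
  N ^+ 2 / (4 * M ^+ 2) - cP LFF LFG LGG / M.
Definition sigma_pm (plus : bool) (LF LFF LFG LGG Fi Gi : R) : R :=
  let M := cM LF LFF LFG LGG Fi Gi in let N := cN LF LFF LFG LGG Fi in
  N / (2 * M) + (if plus then 1 else -1) * Num.sqrt (discr LF LFF LFG LGG Fi Gi).

Definition gtilde (sigma : R) g F : 'M[R]_4 :=
  \matrix_(a < 4, b < 4)
     (ginv g a b + sigma * \sum_(c < 4) up2 g F a c * up1 g F b c).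

Definition Kvec (sigma : R) g F p : 'I_4 -> R :=
  fun a => \sum_(b < 4) gtilde sigma g F a b * p b.
Definition dotv (x y : 'I_4 -> R) : R := \sum_(a < 4) x a * y a.

End Defs.

(* Main.v *)
Require Import Defs.
From HB Require Import structures.
From mathcomp Require Import all_boot all_order all_algebra.
From mathcomp Require Import fingroup perm ring lra.
Set Implicit Arguments. Unset Strict Implicit. Unset Printing Implicit Defensive.
Import Order.TTheory GRing.Theory Num.Theory.
Local Open Scope ring_scope.

Notation o0 := (@Ordinal 4 0 isT).
Notation o1 := (@Ordinal 4 1 isT).
Notation o2 := (@Ordinal 4 2 isT).
Notation o3 := (@Ordinal 4 3 isT).

Lemma ord4_cases (a : 'I_4) : a = o0 \/ a = o1 \/ a = o2 \/ a = o3.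
Proof.
case: a => [[|[|[|[|//]]]] H]; [left|right;left|right;right;left|right;right;right];
 by apply: val_inj.
Qed.

Section Levi.
Variable R : rcfType.

Lemma det_swap n (A B : 'M[R]_n) i1 i2 : i1 != i2 ->
  (forall k j, B k j = A (tperm i1 i2 k) j) -> \det B = - \det A.
Proof.
move=> ne HB.
have -> : B = row_perm (tperm i1 i2) A by apply/matrixP=> k j; rewrite !mxE HB.
by rewrite row_permE det_mulmx det_perm odd_tperm ne expr1 mulN1r.
Qed.

Lemma det_alt n (A : 'M[R]_n) i1 i2 : i1 != i2 -> (forall j, A i1 j = A i2 j) -> \det A = 0.
Proof. by move=> ne H; apply: (determinant_alternate ne) => j. Qed.

Let L := @levi R.

Lemma levi_s12 a b c d : L a b c d = - L b a c d.
Proof.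
apply: (det_swap (i1 := o0) (i2 := o1)) => // k j; rewrite !mxE.
by case: (ord4_cases k) => [->|[->|[->|->]]]; rewrite ?tpermL ?tpermR ?tpermD.
Qed.
Lemma levi_s23 a b c d : L a b c d = - L a c b d.
Proof.
apply: (det_swap (i1 := o1) (i2 := o2)) => // k j; rewrite !mxE.
by case: (ord4_cases k) => [->|[->|[->|->]]]; rewrite ?tpermL ?tpermR ?tpermD.
Qed.
Lemma levi_s34 a b c d : L a b c d = - L a b d c.
Proof.
apply: (det_swap (i1 := o2) (i2 := o3)) => // k j; rewrite !mxE.
by case: (ord4_cases k) => [->|[->|[->|->]]]; rewrite ?tpermL ?tpermR ?tpermD.
Qed.
Lemma levi_e12 a c d : L a a c d = 0.
Proof. by apply: (det_alt (i1 := o0) (i2 := o1)) => // j; rewrite !mxE. Qed.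
Lemma levi_e13 a b d : L a b a d = 0.
Proof. by apply: (det_alt (i1 := o0) (i2 := o2)) => // j; rewrite !mxE. Qed.
Lemma levi_e14 a b c : L a b c a = 0.
Proof. by apply: (det_alt (i1 := o0) (i2 := o3)) => // j; rewrite !mxE. Qed.
Lemma levi_e23 a b d : L a b b d = 0.
Proof. by apply: (det_alt (i1 := o1) (i2 := o2)) => // j; rewrite !mxE. Qed.
Lemma levi_e24 a b c : L a b c b = 0.
Proof. by apply: (det_alt (i1 := o1) (i2 := o3)) => // j; rewrite !mxE. Qed.
Lemma levi_e34 a b c : L a b c c = 0.
Proof. by apply: (det_alt (i1 := o2) (i2 := o3)) => // j; rewrite !mxE. Qed.
Lemma levi0123 : L o0 o1 o2 o3 = 1.
Proof.
rewrite /L /levi; transitivity (\det (1%:M : 'M[R]_4)); last by rewrite det1.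
congr (\det _); apply/matrixP => i j; rewrite !mxE.
by case: (ord4_cases i) => [->|[->|[->|->]]]; rewrite eq_sym.
Qed.
End Levi.

Definition lz (R : rcfType) (a b c d : nat) : R :=
  if uniq [:: a; b; c; d] then
    (if odd ((b < a) + (c < a) + (d < a) + (c < b) + (d < b) + (d < c))%N then -1 else 1)
  else 0.

Ltac sortl :=
  repeat match goal with
  | |- context[levi ?r (@Ordinal _ ?a _) (@Ordinal _ ?b _) ?c ?d] =>
      lazymatch eval compute in (Nat.ltb b a) with true =>
        rewrite [levi r (@Ordinal _ a _) (@Ordinal _ b _) c d]levi_s12 end
  | |- context[levi ?r ?x (@Ordinal _ ?a _) (@Ordinal _ ?b _) ?d] =>
      lazymatch eval compute in (Nat.ltb b a) with true =>
        rewrite [levi r x (@Ordinal _ a _) (@Ordinal _ b _) d]levi_s23 end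
  | |- context[levi ?r ?x ?y (@Ordinal _ ?a _) (@Ordinal _ ?b _)] =>
      lazymatch eval compute in (Nat.ltb b a) with true =>
        rewrite [levi r x y (@Ordinal _ a _) (@Ordinal _ b _)]levi_s34 end
  end.

Lemma levi_val (R : rcfType) (a b c d : 'I_4) :
  levi R a b c d = lz R (val a) (val b) (val c) (val d).
Proof.
case: (ord4_cases a) => [->|[->|[->|->]]];
case: (ord4_cases b) => [->|[->|[->|->]]];
case: (ord4_cases c) => [->|[->|[->|->]]];
case: (ord4_cases d) => [->|[->|[->|->]]]; rewrite /lz /=;
rewrite ?levi_e12 ?levi_e13 ?levi_e14 ?levi_e23 ?levi_e24 ?levi_e34 //;
sortl; rewrite levi0123 ?opprK //.
Qed.

Section Expand.
Variable R : rcfType.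

Definition setrow n (A : 'M[R]_n) i0 (x : 'rV[R]_n) : 'M[R]_n :=
  \matrix_(i, k) if i == i0 then x 0 k else A i k.

Lemma det_setrowD n (A : 'M[R]_n) i0 x y b c :
  \det (setrow A i0 (b *: x + c *: y)) =
  b * \det (setrow A i0 x) + c * \det (setrow A i0 y).
Proof.
apply: (determinant_multilinear (i0 := i0)).
- by apply/rowP => k; rewrite !mxE eqxx ?mxE.
- by apply/matrixP => i k; rewrite !mxE eq_sym (negbTE (neq_lift _ _)).
- by apply/matrixP => i k; rewrite !mxE eq_sym (negbTE (neq_lift _ _)).
Qed.

Lemma det_setrow_sum n (A : 'M[R]_n) i0 (r : seq 'I_n) (cf : 'I_n -> R) :
  \det (setrow A i0 (\sum_(j <- r) cf j *: delta_mx 0 j)) =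
  \sum_(j <- r) cf j * \det (setrow A i0 (delta_mx 0 j)).
Proof.
elim: r => [|j r IH].
  rewrite !big_nil.
  have := det_setrowD A i0 0 0 0 0.
  by rewrite !scale0r addr0 !mul0r addr0.
rewrite !big_cons -IH -[X in cf j *: _ + X]scale1r det_setrowD mul1r.
by [].
Qed.

Lemma det_row_expand n (A : 'M[R]_n) i0 :
  \det A = \sum_j A i0 j * \det (setrow A i0 (delta_mx 0 j)).
Proof.
have {1}-> : A = setrow A i0 (\sum_j (row i0 A) 0 j *: delta_mx 0 j).
  apply/matrixP => i k; rewrite !mxE -row_sum_delta.
  by case: eqP => [->|]; rewrite ?mxE.
rewrite det_setrow_sum; apply: eq_bigr => j _; by rewrite mxE.
Qed.

Lemma det4_expand (M : 'M[R]_4) :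
  \det M = \sum_a \sum_b \sum_c \sum_d
     (M o0 a * M o1 b * M o2 c * M o3 d * levi R a b c d).
Proof.
rewrite (det_row_expand _ o0); apply: eq_bigr => a _.
rewrite (det_row_expand _ o1) big_distrr /=; apply eq_bigr => b _.
rewrite (det_row_expand _ o2) !big_distrr /=; apply eq_bigr => c _.
rewrite (det_row_expand _ o3) !big_distrr /=; apply eq_bigr => d _.
rewrite !mxE /=.
have -> : \det (setrow (setrow (setrow (setrow M o0 (delta_mx 0 a)) o1 (delta_mx 0 b))
              o2 (delta_mx 0 c)) o3 (delta_mx 0 d)) = levi R a b c d.
  rewrite /levi; congr (\det _); apply/matrixP => i j; rewrite !mxE.
  by case: (ord4_cases i) => [->|[->|[->|->]]] /=; rewrite ?mxE /= eq_sym.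
by rewrite !mulrA.
Qed.

Lemma levi_transform (P : 'M[R]_4) i j k l :
  \sum_a \sum_b \sum_c \sum_d
     (levi R a b c d * P a i * P b j * P c k * P d l) = \det P * levi R i j k l.
Proof.
pose E := \matrix_(r < 4, c < 4) ((c == nth ord0 [:: i; j; k; l] r)%:R : R).
have HE : \det (E *m P^T) = \det P * levi R i j k l.
  by rewrite det_mulmx det_tr mulrC.
rewrite -HE det4_expand.
have Hm r c : (E *m P^T) r c = P c (nth ord0 [:: i; j; k; l] r).
  rewrite !mxE (bigD1 (nth ord0 [:: i; j; k; l] r)) //= !mxE eqxx mul1r.
  rewrite big1 ?addr0 // => m /negbTE Hm; by rewrite !mxE Hm mul0r.
apply eq_bigr => a _; apply eq_bigr => b _; apply eq_bigr => c _;
apply eq_bigr => d _; rewrite !Hm /=; ring.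
Qed.
End Expand.

Section Conv.
Variable R : rcfType.
Definition rv (x : 'I_4 -> R) : 'rV[R]_4 := \row_j x j.

Lemma bilE (h : 'M[R]_4) x y : bil h x y = (rv x *m h *m (rv y)^T) 0 0.
Proof.
rewrite /bil !mxE; under [RHS]eq_bigr do rewrite !mxE big_distrl /=.
rewrite exchange_big /=; apply eq_bigr => a _; apply eq_bigr => b _.
rewrite !mxE; ring.
Qed.

Lemma dotvE x y : dotv x y = (rv x *m (rv y)^T) 0 0.
Proof. by rewrite /dotv !mxE; apply eq_bigr => a _; rewrite !mxE. Qed.

Lemma contrE (g : 'M[R]_4) (T : 'M[R]_4) p : rv (contr g T p) = rv p *m (ginv g)^T *m T^T.
Proof.
apply/rowP => j; rewrite !mxE; apply eq_bigr => b _.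
rewrite !mxE /upv mulrC; congr (_ * _); apply eq_bigr => c _; rewrite !mxE mulrC //.
Qed.

Lemma KvecE (s : R) (g F : 'M[R]_4) p : rv (Kvec s g F p) = rv p *m (gtilde s g F)^T.
Proof. by apply/rowP => a; rewrite !mxE; apply eq_bigr => b _; rewrite !mxE mulrC. Qed.

Lemma gtildeE (s : R) (g F : 'M[R]_4) :
  gtilde s g F = ginv g + s *: (up2 g F *m (up1 g F)^T).
Proof.
apply/matrixP => a b; rewrite !mxE; congr (_ + _ * _).
by apply eq_bigr => c _; rewrite !mxE.
Qed.

Lemma sum2tr (A B : 'M[R]_4) :
  \sum_(a < 4) \sum_(b < 4) A a b * B a b = \tr (A *m B^T).
Proof. rewrite /mxtrace; apply eq_bigr => a _; rewrite !mxE; apply eq_bigr => b _; by rewrite !mxE. Qed.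

Lemma FinvarE (g F : 'M[R]_4) : Finvar g F = 2^-1 * \tr (F *m (up2 g F)^T).
Proof. by rewrite /Finvar sum2tr. Qed.

Lemma GinvarE o (g F : 'M[R]_4) : Ginvar o g F = - 4^-1 * \tr (F *m (up2 g (dual o g F))^T).
Proof. by rewrite /Ginvar sum2tr. Qed.

Lemma sum4 (f : 'I_4 -> R) : \sum_(i < 4) f i = f o0 + f o1 + f o2 + f o3.
Proof.
rewrite !big_ord_recl big_ord0 addr0 !addrA.
by congr (f _ + f _ + f _ + f _); apply: val_inj.
Qed.

Definition et (n m : nat) : R := if n == m then (if n == 0%N then -1 else 1) else 0.

Lemma etaE : minkowski R = \matrix_(i, j) et (val i) (val j).
Proof.
apply/matrixP => i j; rewrite !mxE.
case: (ord4_cases i) => [->|[->|[->|->]]]; case: (ord4_cases j) => [->|[->|[->|->]]];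
  by rewrite /et /= ?mulr1n ?mulr0n.
Qed.

Lemma eta_tr : (minkowski R)^T = minkowski R.
Proof. by rewrite /minkowski tr_diag_mx. Qed.

Lemma eta2 : minkowski R *m minkowski R = 1%:M.
Proof.
rewrite etaE; apply/matrixP => i j; rewrite !mxE sum4 !mxE.
case: (ord4_cases i) => [->|[->|[->|->]]]; case: (ord4_cases j) => [->|[->|[->|->]]];
  rewrite /et /=; ring.
Qed.

Lemma det_eta : \det (minkowski R) = -1.
Proof.
rewrite /minkowski det_diag (big_ord_recl) !big_ord_recl big_ord0 !mxE /=. ring.
Qed.
End Conv.

Section Basis.
Variable R : rcfType.
Variables (g P : 'M[R]_4).
Hypothesis HPu : P \in unitmx.
Hypothesis HPg : P^T *m g *m P = minkowski R.
Local Notation eta := (minkowski R).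

Lemma g_eq : g = invmx P^T *m eta *m invmx P.
Proof.
have HPTu : P^T \in unitmx by rewrite unitmx_tr.
by rewrite -HPg !mulmxA mulVmx // mul1mx mulmxK.
Qed.

Lemma ginvE : ginv g = P *m eta *m P^T.
Proof.
have HPTu : P^T \in unitmx by rewrite unitmx_tr.
have H1 : g *m (P *m eta *m P^T) = 1%:M.
  rewrite g_eq !mulmxA mulmxKV // -[_ *m eta *m eta]mulmxA eta2 mulmx1 mulVmx //.
have [gu _] := mulmx1_unit H1.
by rewrite /ginv -[RHS](mulKmx gu) H1 mulmx1.
Qed.

Lemma ginv_tr : (ginv g)^T = ginv g.
Proof. by rewrite ginvE !trmx_mul trmxK eta_tr mulmxA. Qed.

Lemma detg : \det g * \det P ^+ 2 = -1.
Proof.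
have := congr1 determinant HPg; rewrite !det_mulmx det_tr det_eta => <-; ring.
Qed.
End Basis.

Section Dual.
Variable R : rcfType.
Local Notation eta := (minkowski R).
Local Notation I4 := 'I_4.

Lemma pull4 (H : I4 -> I4 -> I4 -> I4 -> I4 -> R) :
  \sum_a \sum_b \sum_c \sum_d \sum_k H a b c d k =
  \sum_k \sum_a \sum_b \sum_c \sum_d H a b c d k.
Proof.
transitivity (\sum_a \sum_b \sum_c \sum_k \sum_d H a b c d k).
  apply eq_bigr=> a _; apply eq_bigr=> b _; apply eq_bigr=> c _; exact: exchange_big.
transitivity (\sum_a \sum_b \sum_k \sum_c \sum_d H a b c d k).
  apply eq_bigr=> a _; apply eq_bigr=> b _; exact: exchange_big.
transitivity (\sum_a \sum_k \sum_b \sum_c \sum_d H a b c d k).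
  apply eq_bigr=> a _; exact: exchange_big.
exact: exchange_big.
Qed.

Lemma sum6 (H : I4 -> I4 -> I4 -> I4 -> I4 -> I4 -> R) :
  \sum_a \sum_b \sum_c \sum_d \sum_k \sum_l H a b c d k l =
  \sum_k \sum_l \sum_a \sum_b \sum_c \sum_d H a b c d k l.
Proof.
rewrite (pull4 (fun a b c d k => \sum_l H a b c d k l)).
apply eq_bigr => k _; exact: (pull4 (fun a b c d l => H a b c d k l)).
Qed.

Definition DL (X : 'M[R]_4) : 'M[R]_4 :=
  \matrix_(i, j) (2^-1 * \sum_k \sum_l levi R i j k l * (eta *m X *m eta) k l).

Lemma gen_transform (Lv : I4 -> I4 -> I4 -> I4 -> R) (s : R) (P X : 'M[R]_4) i j :
  \sum_b (\sum_a P a i * (2^-1 * \sum_c \sum_d (s * Lv a b c d) * (P *m X *m P^T) c d)) * P b j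
  = \sum_a \sum_b \sum_c \sum_d \sum_k \sum_l
   (2^-1 * s * (Lv a b c d * P a i * P b j * P c k * P d l) * X k l).
Proof.
  rewrite [RHS]exchange_big /=; apply eq_bigr => b _.
  rewrite big_distrl /=; apply eq_bigr => a _.
  rewrite !big_distrr !big_distrl /=; apply eq_bigr => c _.
  rewrite !big_distrr !big_distrl /=; apply eq_bigr => d _.
  rewrite !mxE [RHS]exchange_big /=.
  rewrite !big_distrr !big_distrl /=; apply eq_bigr => l _.
  rewrite !mxE ?big_distrl /= ?big_distrr /= ?big_distrl /= ?big_distrr /=; apply eq_bigr => k _.
  ring.
Qed.

Lemma sum4_const (G : I4 -> I4 -> I4 -> I4 -> R) (k0 x : R) :
  \sum_a \sum_b \sum_c \sum_d (k0 * G a b c d * x) = k0 * (\sum_a \sum_b \sum_c \sum_d G a b c d) * x.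
Proof.
rewrite big_distrr big_distrl /=; apply eq_bigr => a _.
rewrite big_distrr big_distrl /=; apply eq_bigr => b _.
rewrite big_distrr big_distrl /=; apply eq_bigr => c0 _.
rewrite big_distrr big_distrl /=; apply eq_bigr => d _.
by [].
Qed.

Lemma dual_transform o (g P F : 'M[R]_4) :
  P \in unitmx -> P^T *m g *m P = eta ->
  P^T *m dual o g F *m P =
  ((if o then 1 else -1) * Num.sqrt `|\det g| * \det P) *: DL (P^T *m F *m P).
Proof.
move=> HPu HPg.
set s := (if o then 1 else -1) * Num.sqrt `|\det g|.
set X := eta *m (P^T *m F *m P) *m eta.
have HU : up2 g F = P *m X *m P^T.
  by rewrite /up2 (ginv_tr HPu HPg) (ginvE HPu HPg) /X !mulmxA.
apply/matrixP => i j; rewrite !mxE.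
have -> : \sum_j0 (P^T *m dual o g F) i j0 * P j0 j =
  \sum_b (\sum_a P a i * (2^-1 * \sum_c \sum_d (s * levi R a b c d) * (P *m X *m P^T) c d)) * P b j.
  apply eq_bigr => b _; rewrite !mxE; congr (_ * _); apply eq_bigr => a _.
  by rewrite !mxE HU.
rewrite gen_transform.
rewrite sum6 [RHS]mulrA [RHS]big_distrr /=; apply eq_bigr => k _.
rewrite [RHS]big_distrr /=; apply eq_bigr => l _.
rewrite sum4_const.
transitivity (2^-1 * s * (\det P * levi R i j k l) * X k l); last by rewrite /X; ring.
by rewrite -levi_transform.
Qed.
End Dual.

Section Tab.
Variable R : rcfType.
Local Notation eta := (minkowski R).
Variables f01 f02 f03 f12 f13 f23 : R.

Definition ft (i j : nat) : R :=
  match i, j with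
  | 0, 1 => f01 | 0, 2 => f02 | 0, 3 => f03 | 1, 2 => f12 | 1, 3 => f13 | 2, 3 => f23
  | 1, 0 => - f01 | 2, 0 => - f02 | 3, 0 => - f03 | 2, 1 => - f12 | 3, 1 => - f13
  | 3, 2 => - f23
  | _, _ => 0 end.
Definition dt (i j : nat) : R :=
  match i, j with
  | 0, 1 => f23 | 0, 2 => - f13 | 0, 3 => f12 | 1, 2 => - f03 | 1, 3 => f02 | 2, 3 => - f01
  | 1, 0 => - f23 | 2, 0 => f13 | 3, 0 => - f12 | 2, 1 => f03 | 3, 1 => - f02
  | 3, 2 => f01
  | _, _ => 0 end.
Definition FT : 'M[R]_4 := \matrix_(i, j) ft (val i) (val j).
Definition DT : 'M[R]_4 := \matrix_(i, j) dt (val i) (val j).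

Lemma DL_tab : DL FT = DT.
Proof.
apply/matrixP => i j; rewrite !mxE !sum4.
rewrite !levi_val etaE.
case: (ord4_cases i) => [->|[->|[->|->]]]; case: (ord4_cases j) => [->|[->|[->|->]]];
rewrite /lz /=;
repeat progress (rewrite ?mul0r ?mulr0 ?add0r ?addr0 ?mxE ?sum4 /= ?/et /=);
by field.
Qed.
End Tab.

Ltac crunch := repeat progress (rewrite ?mul0r ?mulr0 ?add0r ?addr0 ?mxE ?sum4 /= ?/et ?/ft ?/dt /=).

Section Frame.
Variable R : rcfType.
Local Notation eta := (minkowski R).
Variables f01 f02 f03 f12 f13 f23 q0 q1 q2 q3 s e : R.
Definition qt (n : nat) : R := match n with 0 => q0 | 1 => q1 | 2 => q2 | _ => q3 end.
Definition pT : 'rV[R]_4 := \row_j qt (val j).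
Local Notation FT := (FT f01 f02 f03 f12 f13 f23).
Local Notation DT := (DT f01 f02 f03 f12 f13 f23).
Local Notation ft := (ft f01 f02 f03 f12 f13 f23).
Local Notation dt := (dt f01 f02 f03 f12 f13 f23).

Definition uR : 'rV[R]_4 :=
  \row_k (- q0 * ft (val k) 0 + q1 * ft (val k) 1 + q2 * ft (val k) 2 + q3 * ft (val k) 3).
Definition vR : 'rV[R]_4 :=
  \row_k (e * (- q0 * dt (val k) 0 + q1 * dt (val k) 1 + q2 * dt (val k) 2 + q3 * dt (val k) 3)).
Definition HR : 'M[R]_4 :=
  \matrix_(a, b) (et R (val a) (val b) + s * (et R (val a) (val a) * et R (val b) (val b)) *
     (- (ft (val a) 0 * ft (val b) 0) + ft (val a) 1 * ft (val b) 1
      + ft (val a) 2 * ft (val b) 2 + ft (val a) 3 * ft (val b) 3)).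
Definition FiR : R := - f01 ^+ 2 - f02 ^+ 2 - f03 ^+ 2 + f12 ^+ 2 + f13 ^+ 2 + f23 ^+ 2.
Definition GiR : R := e * (f01 * f23 - f02 * f13 + f03 * f12).

Lemma uR_E : pT *m eta *m FT^T = uR.
Proof.
rewrite etaE; apply/rowP => k; case: (ord4_cases k) => [->|[->|[->|->]]]; crunch; rewrite /qt /=; ring.
Qed.
Lemma vR_E : pT *m eta *m (e *: DT)^T = vR.
Proof.
rewrite etaE; apply/rowP => k; case: (ord4_cases k) => [->|[->|[->|->]]]; crunch; rewrite /qt /=; ring.
Qed.

Lemma HR_E : eta + s *: (eta *m FT *m eta *m FT^T *m eta) = HR.
Proof.
rewrite etaE; apply/matrixP => a b.
case: (ord4_cases a) => [->|[->|[->|->]]]; case: (ord4_cases b) => [->|[->|[->|->]]];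
crunch; ring.
Qed.

Lemma FiR_E : 2^-1 * \tr (FT *m eta *m FT^T *m eta) = FiR.
Proof. rewrite etaE /mxtrace sum4; crunch; rewrite /FiR; by field. Qed.

Lemma GiR_E : - 4^-1 * \tr (FT *m eta *m (e *: DT)^T *m eta) = GiR.
Proof. rewrite etaE /mxtrace sum4; crunch; rewrite /GiR; by field. Qed.

End Frame.


Section Frame2.
Variable R : rcfType.
Local Notation eta := (minkowski R).
Variables f01 f02 f03 f12 f13 f23 q0 q1 q2 q3 s e : R.
Local Notation pT := (pT q0 q1 q2 q3).
Local Notation uR := (uR f01 f02 f03 f12 f13 f23 q0 q1 q2 q3).
Local Notation vR := (vR f01 f02 f03 f12 f13 f23 q0 q1 q2 q3 e).
Local Notation HR := (HR f01 f02 f03 f12 f13 f23 s).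
Local Notation FiR := (FiR f01 f02 f03 f12 f13 f23).
Local Notation GiR := (GiR f01 f02 f03 f12 f13 f23 e).
Definition bl (x : 'rV[R]_4) (M : 'M[R]_4) (y : 'rV[R]_4) := (x *m M *m y^T) 0 0.

Lemma bl_expand (x : 'rV[R]_4) M y :
  bl x M y = \sum_a \sum_b x 0 a * M a b * y 0 b.
Proof.
rewrite /bl !mxE exchange_big; apply eq_bigr => a _.
rewrite !mxE big_distrl /=; apply eq_bigr => b _; rewrite ?mxE; ring.
Qed.

Definition hyp := bl pT eta pT + s * bl uR eta uR.

Ltac fin := rewrite /hyp ?etaE !bl_expand /HR /uR /vR /pT /FiR /GiR !sum4; crunch; rewrite /qt /=.

Lemma f1 : bl pT HR uR = 0.
Proof. Time fin; ring. Qed.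

Lemma f2 : bl pT HR vR = 0.
Proof. Time fin; ring. Qed.

Lemma f3 : e = 1 \/ e = -1 -> bl uR HR vR = - GiR * hyp.
Proof. Time move=> He; fin; case: He => ->; ring. Qed.

Lemma f4 : e = 1 \/ e = -1 ->
  bl uR HR uR - bl uR eta uR * (1 + s * FiR - s ^+ 2 * GiR ^+ 2) = s * GiR ^+ 2 * hyp.
Proof. Time move=> He; fin; case: He => ->; ring. Qed.

Lemma f5 : e = 1 \/ e = -1 ->
  bl vR HR vR - bl uR eta uR * (1 + s * FiR - s ^+ 2 * GiR ^+ 2) = (s * GiR ^+ 2 - FiR) * hyp.
Proof. Time move=> He; fin; case: He => ->; ring. Qed.

Lemma f6 : bl pT HR^T pT = hyp.
Proof. Time fin; ring. Qed.
Lemma f7 : bl pT HR^T uR = 0.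
Proof. Time fin; ring. Qed.
Lemma f8 : bl pT HR^T vR = 0.
Proof. Time fin; ring. Qed.
End Frame2.

Section Asm.
Variable R : rcfType.
Local Notation eta := (minkowski R).

Lemma eps_pm (o : bool) (g P : 'M[R]_4) :
  P \in unitmx -> P^T *m g *m P = eta ->
  let e := (if o then 1 else -1) * Num.sqrt `|\det g| * \det P in e = 1 \/ e = -1.
Proof.
move=> HPu HPg e.
have h2 : e ^+ 2 = 1.
  rewrite /e !exprMn sqr_sqrtr ?normr_ge0 //.
  have -> : (if o then 1 else -1) ^+ 2 = 1 :> R by clear e; case: o; ring.
  rewrite mul1r -(ger0_norm (sqr_ge0 (\det P))) -normrM (detg HPg) normrN1 //.
have : (e - 1) * (e + 1) = 0 by rewrite -[RHS](subrr 1) -[X in _ = X - _]h2; ring.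
by move/eqP; rewrite mulf_eq0 subr_eq0 addr_eq0 => /orP [/eqP|/eqP]; [left|right].
Qed.

Lemma antisym_tab (A : 'M[R]_4) : A^T = - A ->
  A = FT (A o0 o1) (A o0 o2) (A o0 o3) (A o1 o2) (A o1 o3) (A o2 o3).
Proof.
move=> HA; have HA' i j : A j i = - A i j by have := congr1 (fun M : 'M[R]_4 => M i j) HA; rewrite !mxE.
apply/matrixP => a b; rewrite mxE.
case: (ord4_cases a) => [->|[->|[->|->]]]; case: (ord4_cases b) => [->|[->|[->|->]]];
rewrite /ft /=; try done; try (by rewrite HA');
 [ have := HA' o0 o0 | have := HA' o1 o1 | have := HA' o2 o2 | have := HA' o3 o3]; lra.
Qed.
End Asm.

Section Transfer.
Variable R : rcfType.
Local Notation eta := (minkowski R).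
Variables (g P : 'M[R]_4).
Hypothesis HPu : P \in unitmx.
Hypothesis HPg : P^T *m g *m P = eta.

Lemma T1 x y : bil (ginv g) x y = bl (rv x *m P) eta (rv y *m P).
Proof. by rewrite bilE (ginvE HPu HPg) /bl trmx_mul !mulmxA. Qed.

Definition HRm (s : R) (F : 'M[R]_4) :=
  eta + s *: (eta *m (P^T *m F *m P) *m eta *m (P^T *m F *m P)^T *m eta).

Lemma gtE s F : gtilde s g F = P *m HRm s F *m P^T.
Proof.
rewrite gtildeE /up2 /up1 (ginv_tr HPu HPg) (ginvE HPu HPg) /HRm.
rewrite mulmxDr mulmxDl -scalemxAr -scalemxAl !trmx_mul !trmxK eta_tr !mulmxA.
by [].
Qed.

Lemma T2 s F x y : bil (gtilde s g F) x y = bl (rv x *m P) (HRm s F) (rv y *m P).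
Proof. by rewrite bilE gtE /bl trmx_mul !mulmxA. Qed.

Lemma T3 s F p x : dotv (Kvec s g F p) x = bl (rv p *m P) (HRm s F)^T (rv x *m P).
Proof. by rewrite dotvE KvecE gtE /bl !trmx_mul !trmxK !mulmxA. Qed.

Lemma T4 (T : 'M[R]_4) p : rv (contr g T p) *m P = rv p *m P *m eta *m (P^T *m T *m P)^T.
Proof. by rewrite contrE (ginv_tr HPu HPg) (ginvE HPu HPg) !trmx_mul !trmxK !mulmxA. Qed.

Lemma Ttr (A B : 'M[R]_4) :
  \tr (A *m (up2 g B)^T) = \tr ((P^T *m A *m P) *m eta *m (P^T *m B *m P)^T *m eta).
Proof.
rewrite /up2 (ginv_tr HPu HPg) (ginvE HPu HPg) !trmx_mul !trmxK eta_tr !mulmxA.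
by rewrite mxtrace_mulC !mulmxA.
Qed.
End Transfer.

Lemma row_tab (R : rcfType) (x : 'rV[R]_4) : x = pT (x 0 o0) (x 0 o1) (x 0 o2) (x 0 o3).
Proof.
apply/rowP => k; rewrite mxE.
by case: (ord4_cases k) => [->|[->|[->|->]]].
Qed.

Unset Implicit Arguments.
Set Strict Implicit.

Theorem proposition3 (R : rcfType) (o : bool) (g F : 'M[R]_4)
    (LF LFF LFG LGG : R) (plus : bool) (p : 'I_4 -> R) :
  lorentzian g -> antisym F ->
  let Fi := Finvar g F in
  let Gi := Ginvar o g F in
  (* standing assumptions *)
  LF != 0 -> cM LF LFF LFG LGG Fi Gi != 0 ->
  (forall b : bool, 1 + sigma_pm b LF LFF LFG LGG Fi Gi * Fi
                     - (sigma_pm b LF LFF LFG LGG Fi Gi) ^+ 2 * Gi ^+ 2 != 0) ->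
  (* sigma_pm is real *)
  0 <= discr LF LFF LFG LGG Fi Gi ->
  (exists i, p i != 0) ->
  let sigma := sigma_pm plus LF LFF LFG LGG Fi Gi in
  let u := contr g F p in
  let v := contr g (dual o g F) p in
  let gt := gtilde sigma g F in
  let K := Kvec sigma g F p in
  bil (ginv g) p p + sigma * bil (ginv g) u u = 0 ->
  let Q := bil (ginv g) u u * (1 + sigma * Fi - sigma ^+ 2 * Gi ^+ 2) in
  [/\ bil gt p u = 0, bil gt p v = 0, bil gt u v = 0,
      bil gt u u = Q & bil gt v v = Q] /\
  [/\ dotv K p = 0, dotv K u = 0 & dotv K v = 0].
Proof.
move=> [_ [P [HPu HPg]]] HF Fi Gi _ _ _ _ _ sigma u v gt K Hhyp Q.
have FT_ : F^T = - F by apply/matrixP => a b; rewrite !mxE HF.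
set Fp := P^T *m F *m P.
have FpT : Fp^T = - Fp by rewrite /Fp !trmx_mul trmxK FT_ mulNmx mulmxN mulmxA.
have HFp := antisym_tab FpT.
set f01 := Fp o0 o1 in HFp; set f02 := Fp o0 o2 in HFp; set f03 := Fp o0 o3 in HFp.
set f12 := Fp o1 o2 in HFp; set f13 := Fp o1 o3 in HFp; set f23 := Fp o2 o3 in HFp.
have He := eps_pm o HPu HPg.
set e := _ * _ * \det P in He.
have HDp : P^T *m dual o g F *m P = e *: DT f01 f02 f03 f12 f13 f23.
  by rewrite (dual_transform o F HPu HPg) -/Fp HFp DL_tab.
have Hp := row_tab (rv p *m P).
set q0 := (rv p *m P) 0 o0 in Hp; set q1 := (rv p *m P) 0 o1 in Hp.
set q2 := (rv p *m P) 0 o2 in Hp; set q3 := (rv p *m P) 0 o3 in Hp.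
have Hu : rv u *m P = uR f01 f02 f03 f12 f13 f23 q0 q1 q2 q3.
  by rewrite /u (T4 HPu HPg) -/Fp Hp HFp uR_E.
have Hv : rv v *m P = vR f01 f02 f03 f12 f13 f23 q0 q1 q2 q3 e.
  by rewrite /v (T4 HPu HPg) HDp Hp vR_E.
have HH : HRm P sigma F = HR f01 f02 f03 f12 f13 f23 sigma.
  by rewrite /HRm -/Fp HFp HR_E.
have HFi : Fi = FiR f01 f02 f03 f12 f13 f23.
  by rewrite /Fi FinvarE (Ttr HPu HPg) -/Fp HFp FiR_E.
have HGi : Gi = GiR f01 f02 f03 f12 f13 f23 e.
  by rewrite /Gi GinvarE (Ttr HPu HPg) -/Fp HDp HFp GiR_E.
have Hh : hyp f01 f02 f03 f12 f13 f23 q0 q1 q2 q3 sigma = 0.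
  by move: Hhyp; rewrite !(T1 HPu HPg) Hp Hu.
have HQ : Q = bl (uR f01 f02 f03 f12 f13 f23 q0 q1 q2 q3) (minkowski R)
      (uR f01 f02 f03 f12 f13 f23 q0 q1 q2 q3) *
     (1 + sigma * FiR f01 f02 f03 f12 f13 f23 - sigma ^+ 2 * GiR f01 f02 f03 f12 f13 f23 e ^+ 2).
  by rewrite /Q (T1 HPu HPg) Hu HFi HGi.
split; split; rewrite /gt /K ?(T2 HPu HPg) ?(T3 HPu HPg) ?HH ?Hp ?Hu ?Hv.
- exact: f1.
- exact: f2.
- by rewrite f3 // Hh mulr0.
- by apply/eqP; rewrite -subr_eq0 HQ f4 // Hh mulr0.
- by apply/eqP; rewrite -subr_eq0 HQ f5 // Hh mulr0.
- by rewrite f6.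
- exact: f7.
- exact: f8.
Qed.
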